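(* Let $(X,Y,A)$ be a random triple with joint distribution $\mathcal{D}$, where $X$ takes values in a measurable space $\mathcal{X}$, $Y\in\{0,1\}$, and $A$ is a discrete random variable with values in $\mathcal{A}$. Let $f:\mathcal{X}\to[0,1]$ be any measurable predictor. Then \[ \mathrm{Suf}_f \le 4\,\mathbb{E}_{A,X}\big[\,|f(X)-f^{\mathrm{Bayes}}_A(X)|\,\big]. \] In particular, if $|\mathcal{A}|<\infty$ and $A$ is uniformly distributed, $\mathcal{D}(A=a)=1/|\mathcal{A}|$ for all $a\in\mathcal{A}$, then \[ \mathrm{Suf}_f \le \frac{4}{|\mathcal{A}|}\sum_{a\in\mathcal{A}} \mathbb{E}_X\big[\,|f(X)-f^{\mathrm{Bayes}}_{A=a}(X)|\;\big|\;A=a\big]. \]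
   Context: The $A$-group Bayes predictor is $f^{\mathrm{Bayes}}_A(X)=\mathbb{E}[Y\mid X,A]$, a function of $(X,A)$; for fixed $a$, $f^{\mathrm{Bayes}}_{A=a}(x)=\mathbb{E}[Y\mid X=x,A=a]$. The group sufficiency gap of a predictor $f$ is $\mathrm{Suf}_f=\mathbb{E}_{A,X}\big[\,|\mathbb{E}[Y\mid f(X)]-\mathbb{E}[Y\mid f(X),A]|\,\big]$, where $\mathbb{E}_{A,X}$ denotes expectation with respect to the marginal distribution of $(A,X)$ under $\mathcal{D}$. *)

(* Defs.v *)
From HB Require Import structures.
From mathcomp Require Import all_boot all_order all_algebra.
From mathcomp Require Import all_classical all_reals all_analysis.
Set Implicit Arguments. Unset Strict Implicit. Unset Printing Implicit Defensive.
Import Order.TTheory GRing.Theory Num.Theory.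
Local Open Scope classical_set_scope.
Local Open Scope ring_scope.

(* [is_cond_exp P Y Z g] : the function [g : U -> R] gives a version of the
   conditional expectation E[Y | Z], i.e. g o Z is a version of E[Y | sigma(Z)]
   (Doob--Dynkin factorisation): g is measurable, g o Z is P-integrable, and
   for every measurable B of the codomain of Z,
     E[Y ; Z in B] = E[g(Z) ; Z in B]. *)
Definition is_cond_exp {d dU : measure_display} {T : measurableType d}
  {R : realType} (P : probability T R) {U : measurableType dU}
  (Y : T -> R) (Z : T -> U) (g : U -> R) : Prop :=
  measurable_fun setT g /\
  P.-integrable setT (fun w => (g (Z w))%:E) /\
  forall B : set U, measurable B ->
    (\int[P]_(w in Z @^-1` B) (Y w)%:E = \int[P]_(w in Z @^-1` B) (g (Z w))%:E)%E.

(* Main.v *)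
Require Import Defs.
From HB Require Import structures.
From mathcomp Require Import all_boot all_order all_algebra.
From mathcomp Require Import all_classical all_reals all_analysis.
From mathcomp Require Import finmap.
From mathcomp Require Import measurable_realfun.
From mathcomp Require Import lra.
Import Order.TTheory GRing.Theory Num.Theory.
Local Open Scope classical_set_scope.
Local Open Scope ring_scope.

Section Aux.
Context {d : measure_display} {T : measurableType d} {R : realType}.
Variable (P : probability T R).

Lemma mabs (D : set T) (F G : T -> R) : measurable D ->
  measurable_fun setT F -> measurable_fun setT G ->
  measurable_fun D (fun w => (`|F w - G w|)%:E).
Proof.
move=> mD mF mG; apply/measurable_EFinP.
apply: (measurable_funS measurableT) => //.
apply: measurableT_comp; first exact: measurable_realfun.normr_measurable.
exact: measurable_realfun.measurable_funB.
Qed.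

Lemma side1 (S : set T) (F G K : T -> R) : measurable S ->
  P.-integrable S (EFin \o F) -> P.-integrable S (EFin \o G) ->
  P.-integrable S (EFin \o K) ->
  (\int[P]_(w in S) (G w)%:E = \int[P]_(w in S) (K w)%:E)%E ->
  (forall w, S w -> G w <= F w) ->
  (\int[P]_(w in S) (`|F w - G w|)%:E <= \int[P]_(w in S) (`|F w - K w|)%:E)%E.
Proof.
move=> mS iF iG iK eq le.
rewrite (eq_integral (fun w => (F w)%:E - (G w)%:E))%E; last first.
  by move=> w /set_mem Sw; rewrite ger0_norm ?subr_ge0 ?le // EFinB.
rewrite integralB_EFin // eq -integralB_EFin //.
apply: le_trans (lee_abs _) _.
apply: le_trans (le_abse_integral P mS (measurable_int _ (integrableB mS iF iK))) _.
rewrite le_eqVlt; apply/orP; left; apply/eqP/eq_integral => w _.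
by rewrite -EFinB abse_EFin.
Qed.

Lemma side2 (S : set T) (F G K : T -> R) : measurable S ->
  P.-integrable S (EFin \o F) -> P.-integrable S (EFin \o G) ->
  P.-integrable S (EFin \o K) ->
  (\int[P]_(w in S) (G w)%:E = \int[P]_(w in S) (K w)%:E)%E ->
  (forall w, S w -> F w <= G w) ->
  (\int[P]_(w in S) (`|F w - G w|)%:E <= \int[P]_(w in S) (`|F w - K w|)%:E)%E.
Proof.
move=> mS iF iG iK eq le.
rewrite (eq_integral (fun w => (G w)%:E - (F w)%:E))%E; last first.
  by move=> w /set_mem Sw; rewrite distrC ger0_norm ?subr_ge0 ?le // EFinB.
rewrite integralB_EFin // eq -integralB_EFin //.
apply: le_trans (lee_abs _) _.
apply: le_trans (le_abse_integral P mS (measurable_int _ (integrableB mS iK iF))) _.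
rewrite le_eqVlt; apply/orP; left; apply/eqP/eq_integral => w _.
by rewrite -EFinB abse_EFin distrC.
Qed.

Lemma key {dU dV : measure_display} {U : measurableType dU} {V : measurableType dV}
  (Y : T -> R) (Z : T -> U) (W : T -> V) (phi : V -> U) (psi : U -> R)
  (g : U -> R) (k : V -> R) :
  measurable_fun setT Z -> measurable_fun setT phi -> measurable_fun setT psi ->
  (forall w, Z w = phi (W w)) ->
  P.-integrable setT (fun w => (psi (Z w))%:E) ->
  is_cond_exp P Y Z g -> is_cond_exp P Y W k ->
  (\int[P]_w (`|psi (Z w) - g (Z w)|)%:E <= \int[P]_w (`|psi (Z w) - k (W w)|)%:E)%E.
Proof.
move=> mZ mphi mpsi hZ iF [mg [iG hG]] [mk [iK hK]].
set B := [set u | g u <= psi u].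
have mB : measurable B.
  by have := measurable_fun_le measurableT mg mpsi; rewrite setTI.
have mBc : measurable (~` B) by exact: measurableC.
set S := Z @^-1` B.
have mS : measurable S by have := mZ measurableT B mB; rewrite setTI.
have mSc : measurable (~` S) by exact: measurableC.
have eqS : forall C, measurable C ->
    (\int[P]_(w in Z @^-1` C) (g (Z w))%:E = \int[P]_(w in Z @^-1` C) (k (W w))%:E)%E.
  move=> C mC; rewrite -hG //.
  have -> : Z @^-1` C = W @^-1` (phi @^-1` C).
    by apply/seteqP; split=> w /=; rewrite hZ.
  apply: hK.
  by have := mphi measurableT C mC; rewrite setTI.
have mF : measurable_fun setT (fun w => psi (Z w)).
  by apply/measurable_EFinP; exact: measurable_int iF.
have mG : measurable_fun setT (fun w => g (Z w)).
  by apply/measurable_EFinP; exact: measurable_int iG.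
have mK : measurable_fun setT (fun w => k (W w)).
  by apply/measurable_EFinP; exact: measurable_int iK.
rewrite -(setUv S).
rewrite (ge0_integral_setU P mS mSc); last 3 first.
- by apply: (@mabs _ (fun w => psi (Z w)) (fun w => g (Z w))) => //; exact: measurableU.
- by move=> w _; rewrite lee_fin.
- by rewrite disj_set2E setICr.
rewrite (ge0_integral_setU P mS mSc (f := fun w => (`|psi (Z w) - k (W w)|)%:E)); last 3 first.
- by apply: (@mabs _ (fun w => psi (Z w)) (fun w => k (W w))) => //; exact: measurableU.
- by move=> w _; rewrite lee_fin.
- by rewrite disj_set2E setICr.
apply: leeD.
- apply: side1 => //.
  + exact: integrableS iF.
  + exact: integrableS iG.
  + exact: integrableS iK.
  + exact: eqS.
- apply: side2 => //.
  + exact: integrableS iF.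
  + exact: integrableS iG.
  + exact: integrableS iK.
  + exact: (eqS (~` B) mBc).
  + by move=> w /= nS; apply/ltW; rewrite ltNge; apply/negP => Sw; apply nS.
Qed.

End Aux.

Theorem theorem1 (R : realType)
  (d : measure_display) (Omega : measurableType d) (P : probability Omega R)
  (dX : measure_display) (XX : measurableType dX)
  (dA : measure_display) (AA : measurableType dA)
  (hAdisc : forall S : set AA, measurable S)
  (hAcount : countable [set: AA])
  (X : Omega -> XX) (Y : Omega -> R) (A : Omega -> AA)
  (mX : measurable_fun setT X) (mY : measurable_fun setT Y)
  (mA : measurable_fun setT A)
  (hY : forall w, Y w = 0 \/ Y w = 1)
  (f : XX -> R) (mf : measurable_fun setT f)
  (hf : forall x, 0 <= f x <= 1)
  (g : R -> R) (hg : is_cond_exp P Y (fun w => f (X w)) g)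
  (h : (R * AA)%type -> R) (hh : is_cond_exp P Y (fun w => (f (X w), A w)) h)
  (fB : (XX * AA)%type -> R) (hfB : is_cond_exp P Y (fun w => (X w, A w)) fB) :
  (\int[P]_w (`| g (f (X w)) - h (f (X w), A w) |)%:E
     <= 4%:E * \int[P]_w (`| f (X w) - fB (X w, A w) |)%:E)%E /\
  (finite_set [set: AA] ->
   (forall a : AA,
      P (A @^-1` [set a]) = ((#|` fset_set [set: AA] |)%:R^-1)%:E) ->
   (\int[P]_w (`| g (f (X w)) - h (f (X w), A w) |)%:E
     <= (4 / (#|` fset_set [set: AA] |)%:R)%:E *
        \sum_(a \in [set: AA])
          (((fine (P (A @^-1` [set a])))^-1)%:E *
           \int[P]_(w in A @^-1` [set a]) (`| f (X w) - fB (X w, a) |)%:E))%E).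
Proof.
have mFX : measurable_fun setT (fun w => f (X w)) := measurableT_comp mf mX.
have mXA : measurable_fun setT (fun w => (X w, A w)) := measurable_fun_pair mX mA.
have mFA : measurable_fun setT (fun w => (f (X w), A w)) := measurable_fun_pair mFX mA.
have iFX : P.-integrable setT (fun w => (f (X w))%:E).
  apply: (measurable_bounded_integrable (f := fun w => f (X w))) => //.
    first [ exact: (@le_lt_trans _ _ 1%E _ _ (probability_le1 P measurableT) (ltry _)) | (rewrite /=; have := probability_setT P; move=> E; rewrite E ltry //) ].
  exists 1; split => // M M1 x _.
  have /andP[f0 f1] := hf (X x).
  by rewrite /= ger0_norm //; apply: le_trans f1 (ltW M1).
have mG : measurable_fun setT (fun w => g (f (X w))) := measurableT_comp hg.1 mFX.
have mH : measurable_fun setT (fun w => h (f (X w), A w)) := measurableT_comp hh.1 mFA.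
have mK : measurable_fun setT (fun w => fB (X w, A w)) := measurableT_comp hfB.1 mXA.
have k1 : (\int[P]_w (`|f (X w) - g (f (X w))|)%:E
           <= \int[P]_w (`|f (X w) - fB (X w, A w)|)%:E)%E.
  apply: (key P Y (fun w => f (X w)) (fun w => (X w, A w))
             (fun p => f p.1) id g fB) => //.
  exact: measurableT_comp mf measurable_fst.
have k2 : (\int[P]_w (`|f (X w) - h (f (X w), A w)|)%:E
           <= \int[P]_w (`|f (X w) - fB (X w, A w)|)%:E)%E.
  apply: (key P Y (fun w => (f (X w), A w)) (fun w => (X w, A w))
             (fun p => (f p.1, p.2)) fst h fB) => //.
  exact: measurable_fun_pair (measurableT_comp mf measurable_fst) measurable_snd.
set I := (\int[P]_w (`|f (X w) - fB (X w, A w)|)%:E)%E.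
have I0 : (0 <= I)%E by apply: integral_ge0 => w _; rewrite lee_fin.
have part1 : (\int[P]_w (`| g (f (X w)) - h (f (X w), A w) |)%:E <= 4%:E * I)%E.
  apply: (@le_trans _ _ (\int[P]_w ((`|f (X w) - g (f (X w))|)%:E
                                   + (`|f (X w) - h (f (X w), A w)|)%:E))%E).
    apply: ge0_le_integral => //.
    - exact: (mabs _ _ _ measurableT mG mH).
    - by apply: emeasurable_funD; [exact: (mabs _ _ _ measurableT mFX mG)|exact: (mabs _ _ _ measurableT mFX mH)].
    - move=> w _; rewrite -EFinD lee_fin.
      by rewrite (distrC (f (X w))) ler_distD.
  rewrite ge0_integralD //; [|exact: (mabs _ _ _ measurableT mFX mG)|exact: (mabs _ _ _ measurableT mFX mH)].
  apply: le_trans (leeD k1 k2) _.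
  have x4 : forall x : \bar R, (0 <= x)%E -> (x + x <= 4%:E * x)%E.
    case=> [r||] //=.
      move=> r0; change ((r + r)%:E <= (4 * r)%:E)%E; rewrite lee_fin; rewrite lee_fin in r0; lra.
    by move=> _; rewrite mulry gtr0_sg // mul1e.
  exact: x4.
split => // finA hP.
set n := #|` fset_set [set: AA]|.
have [w0 _] : exists w : Omega, True.
  case: (pselect (exists w : Omega, True)) => // nw.
  have E : [set: Omega] = set0.
    by apply/seteqP; split => // w _; exfalso; apply: nw; exists w.
  have := probability_setT P; rewrite E measure0 => /eqP.
  by rewrite eq_sym onee_eq0.
have n0 : (0 < n)%N.
  have H : A w0 \in fset_set [set: AA] by rewrite in_fset_set // mem_set.
  rewrite lt0n cardfs_eq0; apply/negP => /eqP E.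
  by rewrite E in_fset0 in H.
have mS : forall a, measurable (A @^-1` [set a]).
  by move=> a; have := mA measurableT [set a] (hAdisc [set a]); rewrite setTI.
set G := fun w => `|f (X w) - fB (X w, A w)|.
have mGG : forall D, measurable D -> measurable_fun D (fun w => (G w)%:E).
  by move=> D mD; exact: (mabs _ _ _ mD mFX mK).
have hterm : forall a, (((fine (P (A @^-1` [set a])))^-1)%:E *
           \int[P]_(w in A @^-1` [set a]) (`| f (X w) - fB (X w, a) |)%:E)%E =
    (\int[P]_w ((fun w => (n%:R * G w)%:E) \_ (A @^-1` [set a])) w)%E.
  move=> a; rewrite hP /= invrK.
  rewrite (eq_integral (fun w => (G w)%:E)); last first.
    by move=> w /set_mem /= Aw; rewrite /G Aw.
  rewrite -ge0_integralZl //; last first.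
    by move=> w _; rewrite lee_fin /G normr_ge0.
    exact: mGG.
  rewrite integral_mkcond; apply: eq_integral => w _.
  by rewrite !patchE; case: ifP => //; rewrite EFinM.
under eq_fsbigr do rewrite hterm.
rewrite -ge0_integral_fsum //; last 2 first.
- move=> a; apply/(measurable_restrictT _ (mS a)).
  apply/measurable_EFinP; apply: measurable_funM => //.
  by apply/measurable_EFinP; exact: mGG.
- move=> a w _; rewrite patchE; case: ifP => _ //.
  by rewrite lee_fin mulr_ge0 // /G normr_ge0.
rewrite (eq_integral (fun w => n%:R%:E * (G w)%:E))%E; last first.
  move=> w _; rewrite (fsbigD1 (A w)) //= patchE mem_set //.
  rewrite fsbig1 ?adde0 ?EFinM //.
  by move=> a [_ /= neq]; rewrite patchE memNset //= => E; apply: neq; rewrite E.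
rewrite ge0_integralZl //; last first.
  by move=> w _; rewrite lee_fin /G normr_ge0.
  exact: mGG.
rewrite muleA -EFinM -mulrA mulVf ?mulr1; last by rewrite pnatr_eq0 -lt0n.
exact: part1.
Qed.
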